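(* Let $n\ge 3$ and consider the regular-polygon generalized probabilistic theory with state space $\Omega_n$ and effect set $\mathcal{E}_n$ (defined in the context). If $n$ is odd with $n\ge 5$, or $n$ is even with $n\ge 6$, then this theory does not satisfy Information Symmetry. That is, there exist two pure states $\omega,\omega'\in\Omega_n$ such that every minimum-error measurement $\{e,u-e\}$ for discriminating $\omega$ and $\omega'$ in which $e$ is an extremal point of $\mathcal{E}_n$ has $p(e\mid\omega')\neq p(u-e\mid\omega)$.
   Context: **Regular polygon model.** Fix $n\ge3$ and set $r_n=\sqrt{\sec(\pi/n)}$. - **Pure states.** These are $\omega_i=\big(r_n\cos\tfrac{2\pi i}{n},\,r_n\sin\tfrac{2\pi i}{n},\,1\big)^T\in\mathbb{R}^3$ for $i=0,\dots,n-1$. The state space $\Omega_n$ is their convex hull. - **Unit effect.** $u=(0,0,1)^T$. - **Extremal effects, even $n$.** $e_i=\tfrac12\big(r_n\cos\tfrac{(2i-1)\pi}{n},\,r_n\sin\tfrac{(2i-1)\pi}{n},\,1\big)^T$. - **Extremal effects, odd $n$.** $e_i=\tfrac{1}{1+r_n^2}\big(r_n\cos\tfrac{2\pi i}{n},\,r_n\sin\tfrac{2\pi i}{n},\,1\big)^T$. - **Complements.** $\bar e_i=u-e_i$. - **Effect set.** $\mathcal{E}_n$ is the convex hull of $0$, $u$ and $\{e_i,\bar e_i\}_{i=0}^{n-1}$. - **Probabilities.** The probability that effect $e$ clicks on state $\omega$ is $p(e\mid\omega)=e\cdot\omega$, the Euclidean inner product. - **Measurements.** A two-outcome measurement is a pair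 $\{e,u-e\}$ with $e\in\mathcal{E}_n$. **Binary discrimination with uniform prior.** One of two states $\omega_1,\omega_2$ is prepared, each with probability $1/2$. One performs $\{e_1,e_2\}$ with $e_1+e_2=u$ and guesses $\omega_i$ when $e_i$ clicks. - The two error probabilities are $p_{12}=p(e_1\mid\omega_2)$ and $p_{21}=p(e_2\mid\omega_1)$. - The total error is $p_E=\tfrac12(p_{12}+p_{21})$. - A minimum-error measurement is one minimizing $p_E$ over all allowed two-outcome measurements. **Information Symmetry (IS).** A theory satisfies IS if, for every pair of distinct pure states, there is a minimum-error measurement $\{e,u-e\}$ with $e$ an extremal point of the effect set such that $p_{12}=p_{21}$. *)

(* Defs.v *)
From Stdlib Require Import Reals Lra Lia List Arith.
Import ListNotations.
Open Scope R_scope.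

Record vec3 := mkV { vx : R; vy : R; vz : R }.

Definition vzero : vec3 := mkV 0 0 0.
Definition vadd (a b : vec3) : vec3 := mkV (vx a + vx b) (vy a + vy b) (vz a + vz b).
Definition vsub (a b : vec3) : vec3 := mkV (vx a - vx b) (vy a - vy b) (vz a - vz b).
Definition vscale (t : R) (a : vec3) : vec3 := mkV (t * vx a) (t * vy a) (t * vz a).
Definition dot (a b : vec3) : R := vx a * vx b + vy a * vy b + vz a * vz b.

Fixpoint rsum (m : nat) (f : nat -> R) : R :=
  match m with O => 0 | S k => rsum k f + f k end.
Fixpoint vsum (m : nat) (f : nat -> vec3) : vec3 :=
  match m with O => vzero | S k => vadd (vsum k f) (f k) end.

Definition conv_hull (l : list vec3) (v : vec3) : Prop :=
  exists c : nat -> R,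
    (forall k, (k < length l)%nat -> 0 <= c k) /\
    rsum (length l) c = 1 /\
    v = vsum (length l) (fun k => vscale (c k) (nth k l vzero)).

Definition extreme_point (S : vec3 -> Prop) (e : vec3) : Prop :=
  S e /\
  forall a b t, S a -> S b -> 0 < t < 1 ->
    e = vadd (vscale t a) (vscale (1 - t) b) -> a = e /\ b = e.

Definition r_n (n : nat) : R := sqrt (/ cos (PI / INR n)).

Definition omega (n i : nat) : vec3 :=
  mkV (r_n n * cos (2 * PI * INR i / INR n))
      (r_n n * sin (2 * PI * INR i / INR n)) 1.

Definition unit_eff : vec3 := mkV 0 0 1.

Definition eff (n i : nat) : vec3 :=
  if Nat.even n then
    vscale (1/2) (mkV (r_n n * cos ((2 * INR i - 1) * PI / INR n))
                      (r_n n * sin ((2 * INR i - 1) * PI / INR n)) 1)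
  else
    vscale (/ (1 + r_n n ^ 2))
      (mkV (r_n n * cos (2 * PI * INR i / INR n))
           (r_n n * sin (2 * PI * INR i / INR n)) 1).

Definition eff_bar (n i : nat) : vec3 := vsub unit_eff (eff n i).

Definition effect_gens (n : nat) : list vec3 :=
  vzero :: unit_eff :: map (eff n) (seq 0 n) ++ map (eff_bar n) (seq 0 n).

Definition effect_set (n : nat) (e : vec3) : Prop := conv_hull (effect_gens n) e.

Definition prob (e w : vec3) : R := dot e w.

(* total error of measurement {e, u - e} guessing w1 on e, w2 on u - e,
   uniform prior: p_E = (p(e|w2) + p(u-e|w1)) / 2 *)
Definition p_err (w1 w2 e : vec3) : R :=
  / 2 * (prob e w2 + prob (vsub unit_eff e) w1).

Definition min_error (n : nat) (w1 w2 e : vec3) : Prop :=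
  effect_set n e /\
  forall e', effect_set n e' -> p_err w1 w2 e <= p_err w1 w2 e'.

Definition info_symmetry (n : nat) : Prop :=
  forall i j, (i < n)%nat -> (j < n)%nat -> i <> j ->
    exists e, min_error n (omega n i) (omega n j) e /\
              extreme_point (effect_set n) e /\
              prob e (omega n j) = prob (vsub unit_eff e) (omega n i).

(* Main.v *)
Require Import Defs.
From Stdlib Require Import Reals Arith Lra Lia List.
Open Scope R_scope.

Lemma rsum_ext m f g : (forall k, (k < m)%nat -> f k = g k) -> rsum m f = rsum m g.
Proof. induction m; simpl; intros H; auto. rewrite IHm, H; auto. Qed.

Lemma rsum_le m f g : (forall k, (k < m)%nat -> f k <= g k) -> rsum m f <= rsum m g.
Proof. induction m; simpl; intros H. lra. pose proof (IHm (fun k Hk => H k (Nat.lt_lt_succ_r _ _ Hk))). pose proof (H m (Nat.lt_succ_diag_r m)). lra. Qed.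

Lemma rsum_plus m f g : rsum m (fun k => f k + g k) = rsum m f + rsum m g.
Proof. induction m; simpl. lra. rewrite IHm; lra. Qed.

Lemma rsum_scal m a f : rsum m (fun k => a * f k) = a * rsum m f.
Proof. induction m; simpl. lra. rewrite IHm; lra. Qed.

Lemma rsum_zero_each m h : (forall k, (k < m)%nat -> 0 <= h k) -> rsum m h <= 0 ->
  forall k, (k < m)%nat -> h k = 0.
Proof.
  induction m; simpl; intros H0 Hs k Hk. lia.
  assert (0 <= rsum m h) by (pose proof (rsum_le m (fun _ => 0) h); simpl in *;
     assert (rsum m (fun _ => 0) = 0) by (clear; induction m; simpl; lra);
     assert (forall k, (k < m)%nat -> 0 <= h k) by (intros; apply H0; lia); intuition lra).
  assert (0 <= h m) by (apply H0; lia).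
  destruct (Nat.eq_dec k m). subst; lra.
  apply IHm; [intros; apply H0; lia | lra | lia].
Qed.

Lemma dot_vsum a m f : dot a (vsum m f) = rsum m (fun k => dot a (f k)).
Proof. induction m; simpl. unfold dot, vzero; simpl; ring. rewrite <- IHm. unfold dot, vadd; simpl; ring. Qed.

Lemma hull_aff L e : conv_hull L e -> exists c : nat -> R,
  (forall k, (k < length L)%nat -> 0 <= c k) /\ rsum (length L) c = 1 /\
  forall a b, dot a e + b = rsum (length L) (fun k => c k * (dot a (nth k L vzero) + b)).
Proof.
  intros [c [H1 [H2 H3]]]. exists c; split; auto; split; auto.
  intros a b. subst e. rewrite dot_vsum.
  rewrite (rsum_ext _ (fun k => c k * (dot a (nth k L vzero) + b))
    (fun k => dot a (vscale (c k) (nth k L vzero)) + b * c k)).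
  rewrite rsum_plus, rsum_scal, H2. ring.
  intros k _. unfold dot, vscale; simpl; ring.
Qed.

Lemma vec_eq (a b : vec3) : vx a = vx b -> vy a = vy b -> vz a = vz b -> a = b.
Proof. destruct a, b; simpl; intros; subst; auto. Qed.

Lemma conv_hull_nth L p : (p < length L)%nat -> conv_hull L (nth p L vzero).
Proof.
  intros Hp. set (c := fun k => if Nat.eq_dec k p then 1 else 0).
  assert (Hs : forall m, ((p < m)%nat -> rsum m c = 1 /\
       vsum m (fun k => vscale (c k) (nth k L vzero)) = nth p L vzero) /\
     ((m <= p)%nat -> rsum m c = 0 /\
       vsum m (fun k => vscale (c k) (nth k L vzero)) = vzero)).
  { induction m; simpl.
    - split; intros; [lia|]. split; auto.
    - destruct IHm as [IH1 IH2]. destruct (Nat.eq_dec m p).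
      + subst. replace (c p) with 1 by (unfold c; destruct Nat.eq_dec; congruence). split; intros; [|lia]. destruct (IH2 (le_n _)) as [-> ->].
        split. lra. apply vec_eq; unfold vadd, vscale; simpl; ring.
      + replace (c m) with 0 by (unfold c; destruct Nat.eq_dec; congruence). split; intros.
        * destruct (IH1 ltac:(lia)) as [-> ->]. split. lra.
          apply vec_eq; unfold vadd, vscale; simpl; ring.
        * destruct (IH2 ltac:(lia)) as [-> ->]. split. lra.
          apply vec_eq; unfold vadd, vscale; simpl; ring. }
  exists c. split. intros; unfold c; destruct Nat.eq_dec; lra.
  destruct (proj1 (Hs (length L)) Hp). split; auto.
Qed.

Lemma conv_hull_In L g : In g L -> conv_hull L g.
Proof. intros H. destruct (In_nth L g vzero H) as [p [Hp <-]]. apply conv_hull_nth; auto. Qed.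

Definition ex3 := mkV 1 0 0.
Definition ey3 := mkV 0 1 0.
Definition ez3 := mkV 0 0 1.

Lemma face_lemma L d A B e :
  A <> B -> conv_hull L A -> conv_hull L B -> dot d A = dot d B ->
  (forall g, In g L -> dot d g <= dot d A /\ (dot d g = dot d A -> g = A \/ g = B)) ->
  conv_hull L e -> dot d A <= dot d e -> extreme_point (conv_hull L) e -> e = A \/ e = B.
Proof.
  intros HAB HA HB HdAB Hg He Hde Hext.
  destruct (hull_aff L e He) as [c [Hc0 [Hc1 Haff]]].
  set (M := dot d A).
  assert (Hw : forall k, (k < length L)%nat -> c k = 0 \/ nth k L vzero = A \/ nth k L vzero = B).
  { intros k Hk.
    assert (Hz := rsum_zero_each (length L)
      (fun k => c k * (dot (vscale (-1) d) (nth k L vzero) + M))).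
    assert (Hin : forall k, (k < length L)%nat -> In (nth k L vzero) L) by (intros; apply nth_In; auto).
    assert (Hdv : forall v, dot (vscale (-1) d) v = - dot d v) by (intros; unfold dot, vscale; simpl; ring).
    specialize (Hz ltac:(intros k' Hk'; cbv beta; rewrite Hdv; destruct (Hg _ (Hin k' Hk')) as [H1 _];
       apply Rmult_le_pos; [apply Hc0; auto| unfold M in *; lra])).
    rewrite <- Haff, Hdv in Hz. specialize (Hz ltac:(unfold M in *; lra) k Hk).
    simpl in Hz. rewrite Hdv in Hz. apply Rmult_integral in Hz. destruct Hz as [Hz|Hz]; auto.
    right. apply (Hg _ (Hin k Hk)). unfold M in *; lra. }
  set (D := vsub B A). set (nd := dot D D).
  assert (Hnd : 0 < nd).
  { unfold nd, D, dot, vsub. destruct A as [a1 a2 a3], B as [b1 b2 b3]; simpl.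
    pose proof (Rle_0_sqr (b1-a1)); pose proof (Rle_0_sqr (b2-a2)); pose proof (Rle_0_sqr (b3-a3)); unfold Rsqr in *.
    destruct (Req_dec a1 b1); [destruct (Req_dec a2 b2); [destruct (Req_dec a3 b3)|]|].
    - subst; exfalso; auto.
    - assert (0 < (b3-a3)*(b3-a3)) by (apply Rsqr_pos_lt; lra). unfold Rsqr in *; lra.
    - assert (0 < (b2-a2)*(b2-a2)) by (apply Rsqr_pos_lt; lra). unfold Rsqr in *; lra.
    - assert (0 < (b1-a1)*(b1-a1)) by (apply Rsqr_pos_lt; lra). unfold Rsqr in *; lra. }
  set (T := (dot D e - dot D A) / nd).
  assert (HBA : dot D B - dot D A = nd) by (unfold nd, D, dot, vsub; simpl; ring).
  assert (Hcoord : forall b, dot b e = dot b A + T * dot b D).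
  { intros b.
    set (a := vsub b (vscale (dot b D / nd) D)).
    set (b0 := - dot b A + (dot b D / nd) * dot D A).
    assert (Hl : forall v, dot a v + b0 = dot b v - dot b A - (dot b D / nd) * (dot D v - dot D A))
      by (intros; unfold a, b0, dot, vsub, vscale; simpl; ring).
    assert (Hsum : rsum (length L) (fun k => c k * (dot a (nth k L vzero) + b0)) = 0).
    { transitivity (rsum (length L) (fun _ => 0)).
      apply rsum_ext. intros k Hk. destruct (Hw k Hk) as [H|[H|H]].
      rewrite H; ring. rewrite H, Hl; ring. rewrite H, Hl.
      replace (dot b B - dot b A) with (dot b D) by (unfold D, dot, vsub; simpl; ring).
      rewrite HBA. field. lra.
      clear; induction (length L); simpl; lra. }
    rewrite <- Haff, Hl in Hsum. unfold T.
    replace ((dot D e - dot D A) / nd * dot b D) with (dot b D / nd * (dot D e - dot D A)) by (field; lra). lra. }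
  assert (HT0 : 0 <= T).
  { unfold T. apply Rmult_le_pos. 2: left; apply Rinv_0_lt_compat; lra.
    assert (dot D e + - dot D A = rsum (length L) (fun k => c k * (dot D (nth k L vzero) + - dot D A))) by apply Haff.
    assert (0 <= rsum (length L) (fun k => c k * (dot D (nth k L vzero) + - dot D A))).
    { apply Rle_trans with (rsum (length L) (fun _ => 0)).
      right; clear; induction (length L); simpl; lra.
      apply rsum_le. intros k Hk. destruct (Hw k Hk) as [Hq|[Hq|Hq]]; rewrite Hq.
      lra. lra. apply Rmult_le_pos. auto. lra. }
    lra. }
  assert (HT1 : T <= 1).
  { unfold T. apply (Rmult_le_reg_r nd). lra. unfold Rdiv. rewrite Rmult_assoc, Rinv_l, Rmult_1_r by lra.
    assert (dot (vscale (-1) D) e + dot D B = rsum (length L) (fun k => c k * (dot (vscale (-1) D) (nth k L vzero) + dot D B))) by apply Haff.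
    assert (Hdv : forall v, dot (vscale (-1) D) v = - dot D v) by (intros; unfold dot, vscale; simpl; ring).
    assert (0 <= rsum (length L) (fun k => c k * (dot (vscale (-1) D) (nth k L vzero) + dot D B))).
    { apply Rle_trans with (rsum (length L) (fun _ => 0)).
      right; clear; induction (length L); simpl; lra.
      apply rsum_le. intros k Hk. destruct (Hw k Hk) as [Hq|[Hq|Hq]]; rewrite Hq, ?Hdv.
      lra. apply Rmult_le_pos. auto. lra. lra. }
    rewrite Hdv in *. lra. }
  assert (HeT : e = vadd (vscale T B) (vscale (1 - T) A)).
  { apply vec_eq.
    - replace (vx e) with (dot ex3 e) by (unfold dot; simpl; ring). rewrite Hcoord.
      unfold dot, ex3, D, vsub, vadd, vscale; simpl; ring.
    - replace (vy e) with (dot ey3 e) by (unfold dot; simpl; ring). rewrite Hcoord.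
      unfold dot, ey3, D, vsub, vadd, vscale; simpl; ring.
    - replace (vz e) with (dot ez3 e) by (unfold dot; simpl; ring). rewrite Hcoord.
      unfold dot, ez3, D, vsub, vadd, vscale; simpl; ring. }
  destruct (Req_dec T 0) as [H0|H0].
  { left. rewrite HeT, H0. apply vec_eq; unfold vadd, vscale; simpl; ring. }
  destruct (Req_dec T 1) as [H1|H1].
  { right. rewrite HeT, H1. apply vec_eq; unfold vadd, vscale; simpl; ring. }
  destruct Hext as [_ Hext]. destruct (Hext B A T HB HA ltac:(lra) HeT) as [E1 E2].
  exfalso. apply HAB. congruence.
Qed.

Lemma cos_red N p : (1 <= N)%nat -> Nat.Odd p -> exists q, (1 <= q <= N)%nat /\
  cos (INR p * PI / INR N) = cos (INR q * PI / INR N).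
Proof.
  intros HN [x Hx].
  assert (H2N : (2 * N <> 0)%nat) by lia.
  pose proof (Nat.div_mod p (2*N) H2N) as Hdm.
  pose proof (Nat.mod_upper_bound p (2*N) H2N) as Hub.
  set (a := (p / (2*N))%nat) in *. set (b := (p mod (2*N))%nat) in *.
  assert (HNa : exists y, (2 * N * a = 2 * y)%nat) by (exists (N*a)%nat; lia).
  destruct HNa as [y Hy].
  assert (Hbo : (b = 2 * (x - y) + 1)%nat) by lia.
  assert (HNR : INR N <> 0) by (apply not_0_INR; lia).
  assert (Hc : cos (INR p * PI / INR N) = cos (INR b * PI / INR N)).
  { rewrite Hdm, plus_INR, !mult_INR. rewrite <- (cos_period (INR b * PI / INR N) a).
    f_equal. simpl. field. auto. }
  rewrite Hc.
  destruct (le_lt_dec b N).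
  - exists b. split; auto. lia.
  - exists (2 * N - b)%nat. split. lia.
    rewrite minus_INR by lia. rewrite mult_INR.
    rewrite <- (cos_neg (INR b * PI / INR N)). rewrite <- (cos_period (- (INR b * PI / INR N)) 1). f_equal. simpl. field. auto.
Qed.

Lemma cos_odd_le N p : (1 <= N)%nat -> Nat.Odd p ->
  cos (INR p * PI / INR N) <= cos (PI / INR N).
Proof.
  intros HN Hp. destruct (cos_red N p HN Hp) as [q [Hq ->]].
  assert (1 <= INR N) by (apply (le_INR 1); auto).
  assert (1 <= INR q) by (apply (le_INR 1); lia).
  assert (INR q <= INR N) by (apply le_INR; lia).
  pose proof PI_RGT_0.
  apply cos_decr_1.
  - unfold Rdiv; apply Rmult_le_pos; [lra | left; apply Rinv_0_lt_compat; lra].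
  - apply (Rmult_le_reg_r (INR N)). lra. unfold Rdiv; rewrite Rmult_assoc, Rinv_l by lra. nra.
  - unfold Rdiv; apply Rmult_le_pos; [nra | left; apply Rinv_0_lt_compat; lra].
  - apply (Rmult_le_reg_r (INR N)). lra. unfold Rdiv; rewrite Rmult_assoc, Rinv_l by lra. nra.
  - unfold Rdiv. apply Rmult_le_compat_r. left; apply Rinv_0_lt_compat; lra. nra.
Qed.

Lemma cos_odd_lt1 N p : (1 <= N)%nat -> Nat.Odd p -> cos (INR p * PI / INR N) < 1.
Proof.
  intros HN Hp. destruct (cos_red N p HN Hp) as [q [Hq ->]].
  assert (1 <= INR N) by (apply (le_INR 1); auto).
  assert (1 <= INR q) by (apply (le_INR 1); lia).
  assert (INR q <= INR N) by (apply le_INR; lia).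
  pose proof PI_RGT_0. rewrite <- cos_0.
  assert (INR q * PI / INR N <= PI).
  { apply (Rmult_le_reg_r (INR N)). lra. unfold Rdiv; rewrite Rmult_assoc, Rinv_l by lra. nra. }
  assert (0 < INR q * PI / INR N).
  { unfold Rdiv; apply Rmult_lt_0_compat; [nra | apply Rinv_0_lt_compat; lra]. }
  apply cos_decreasing_1; lra.
Qed.

Lemma rot_solve c s C S : c*c + s*s = 1 -> C*C + S*S = 1 -> c*C - s*S = c ->
  (C = 1 /\ S = 0) \/ (C = c*c - s*s /\ S = -2*s*c).
Proof.
  intros H1 H2 H3. set (u := s*C + c*S).
  assert (Hu : u * u = s * s).
  { replace (u*u) with ((C*C+S*S)*(c*c+s*s) - (c*C - s*S)*(c*C - s*S)) by (unfold u; ring).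
    rewrite H1, H2, H3. lra. }
  assert (HC : C = c * c + s * u).
  { assert (E : C - (c*c + s*u) = C*(1 - (c*c+s*s)) + c*(c*C - s*S - c)) by (unfold u; ring).
    rewrite H1, H3 in E. lra. }
  assert (HS : S = c * u - s * c).
  { assert (E : S - (c*u - s*c) = S*(1 - (c*c+s*s)) - s*(c*C - s*S - c)) by (unfold u; ring).
    rewrite H1, H3 in E. lra. }
  assert (Hc : (u - s) * (u + s) = 0) by nra.
  apply Rmult_integral in Hc. destruct Hc as [Hc|Hc].
  - left. replace u with s in * by lra. split; nra.
  - right. replace u with (-s) in * by lra. split; nra.
Qed.

Lemma in_gens n g : In g (effect_gens n) -> g = vzero \/ g = unit_eff \/
  (exists k, (k < n)%nat /\ g = eff n k) \/ (exists k, (k < n)%nat /\ g = eff_bar n k).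
Proof.
  unfold effect_gens. simpl. intros [H|[H|H]]; auto.
  apply in_app_iff in H. destruct H as [H|H]; apply in_map_iff in H; destruct H as [k [Hk Hin]];
  apply in_seq in Hin; right; right; [left|right]; exists k; split; auto; lia.
Qed.

Lemma eff_in n k : (k < n)%nat -> In (eff n k) (effect_gens n).
Proof. intros. unfold effect_gens. right; right. apply in_app_iff; left. apply in_map, in_seq; lia. Qed.

Lemma effbar_in n k : (k < n)%nat -> In (eff_bar n k) (effect_gens n).
Proof. intros. unfold effect_gens. right; right. apply in_app_iff; right. apply in_map, in_seq; lia. Qed.

Lemma not_IS_pair n i j A B : (i < n)%nat -> (j < n)%nat -> i <> j -> A <> B ->
  In A (effect_gens n) -> In B (effect_gens n) ->
  dot (vsub (omega n i) (omega n j)) A = dot (vsub (omega n i) (omega n j)) B ->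
  (forall g, In g (effect_gens n) ->
     dot (vsub (omega n i) (omega n j)) g <= dot (vsub (omega n i) (omega n j)) A /\
     (dot (vsub (omega n i) (omega n j)) g = dot (vsub (omega n i) (omega n j)) A -> g = A \/ g = B)) ->
  prob A (omega n j) <> prob (vsub unit_eff A) (omega n i) ->
  prob B (omega n j) <> prob (vsub unit_eff B) (omega n i) ->
  ~ info_symmetry n.
Proof.
  intros Hi Hj Hij HAB HA HB HdAB Hg HsA HsB IS.
  destruct (IS i j Hi Hj Hij) as [e [[He Hmin] [Hext Hsym]]].
  assert (Hd : dot (vsub (omega n i) (omega n j)) A <= dot (vsub (omega n i) (omega n j)) e).
  { specialize (Hmin A (conv_hull_In _ _ HA)). unfold p_err, prob in Hmin.
    unfold dot, vsub, omega, unit_eff in *; simpl in *. lra. }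
  destruct (face_lemma (effect_gens n) _ A B e HAB (conv_hull_In _ _ HA) (conv_hull_In _ _ HB)
     HdAB Hg He Hd Hext) as [->| ->]; auto.
Qed.

Lemma r_facts n : (3 <= n)%nat -> 0 < cos (PI / INR n) /\ 0 < r_n n /\
  r_n n * r_n n = / cos (PI / INR n).
Proof.
  intros Hn. assert (3 <= INR n) by (pose proof (le_INR 3 n Hn) as X; simpl in X; lra). pose proof PI_RGT_0.
  assert (Hc : 0 < cos (PI / INR n)).
  { apply cos_gt_0. assert (0 < PI / INR n) by (apply Rdiv_lt_0_compat; lra). lra.
    apply (Rmult_lt_reg_r (INR n)). lra. unfold Rdiv. rewrite Rmult_assoc, Rinv_l by lra. nra. }
  split; auto. unfold r_n. split.
  apply sqrt_lt_R0, Rinv_0_lt_compat; auto.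
  apply sqrt_sqrt. left; apply Rinv_0_lt_compat; auto.
Qed.

Section OddCase.
Variable m : nat.
Hypothesis Hm : (2 <= m)%nat.
Let n := (2 * m + 1)%nat.
Let t := PI / INR n.
Let r := r_n n.
Let z1 := / (1 + r ^ 2).

Lemma INRn : INR n = 2 * INR m + 1.
Proof. unfold n. rewrite plus_INR, mult_INR. simpl. ring. Qed.

Lemma nevenf : Nat.even n = false.
Proof. unfold n. apply Nat.even_odd. Qed.

Lemma t_bounds : 0 < t /\ t <= PI / 5.
Proof.
  unfold t. rewrite INRn. assert (2 <= INR m) by (pose proof (le_INR 2 m Hm) as X; simpl in X; lra). pose proof PI_RGT_0.
  split. apply Rdiv_lt_0_compat; lra.
  unfold Rdiv. apply Rmult_le_compat_l. lra. apply Rinv_le_contravar; lra.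
Qed.

Lemma eff_form k : eff n k = vscale z1 (mkV (r * cos (2 * PI * INR k / INR n))
   (r * sin (2 * PI * INR k / INR n)) 1).
Proof. unfold eff. rewrite nevenf. reflexivity. Qed.

Lemma om_i : omega n (2 * m) = mkV (r * cos (2 * t)) (- (r * sin (2 * t))) 1.
Proof.
  unfold omega. fold r.
  replace (2 * PI * INR (2 * m) / INR n) with (- (2 * t) + 2 * INR 1 * PI).
  rewrite cos_period, sin_period, cos_neg, sin_neg. f_equal; ring.
  unfold t. rewrite mult_INR, INRn. simpl. field. pose proof (pos_INR m). lra.
Qed.

Lemma om_j : omega n (m + 1) = mkV (- (r * cos t)) (- (r * sin t)) 1.
Proof.
  unfold omega. fold r.
  replace (2 * PI * INR (m + 1) / INR n) with (t + PI).
  rewrite neg_cos, neg_sin. f_equal; ring.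
  unfold t. rewrite plus_INR, INRn. simpl. field. pose proof (pos_INR m). lra.
Qed.


Let c := cos (t / 2).
Let s := sin (t / 2).

Lemma npos : (1 <= n)%nat.
Proof. unfold n; lia. Qed.

Lemma INRn_pos : 0 < INR n.
Proof. rewrite INRn. pose proof (pos_INR m). lra. Qed.

Lemma basic_facts : 0 < cos t /\ 0 < r /\ r * r = / cos t /\ 0 < c /\ 0 < s /\
  c * c + s * s = 1 /\ cos t = c * c - s * s /\ sin t = 2 * s * c /\
  cos (2 * t) = 2 * cos t * cos t - 1 /\ sin (2 * t) = 2 * sin t * cos t /\
  1 / 2 < cos t /\ cos (2 * t) < 1 /\ 0 < sin t.
Proof.
  destruct (r_facts n ltac:(unfold n; lia)) as [H1 [H2 H3]]. fold t in H1, H3. fold r in H2, H3.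
  destruct t_bounds as [T1 T2]. pose proof PI_RGT_0.
  assert (Ht : t = 2 * (t / 2)) by field.
  split; auto. split; auto. split; auto.
  split. unfold c. apply cos_gt_0; lra.
  split. unfold s. apply sin_gt_0; lra.
  split. unfold c, s. rewrite Rplus_comm. apply sin2_cos2.
  split. unfold c, s. rewrite Ht at 1. apply cos_2a.
  split. unfold c, s. rewrite Ht at 1. rewrite sin_2a. ring.
  split. apply cos_2a_cos. split. apply sin_2a.
  split. rewrite <- cos_PI3. apply cos_decreasing_1; lra.
  split. rewrite <- cos_0. apply cos_decreasing_1; lra.
  apply sin_gt_0; lra.
Qed.

Lemma eff0 : eff n 0 = mkV (z1 * r) 0 z1.
Proof.
  rewrite eff_form. replace (2 * PI * INR 0 / INR n) with 0.
  rewrite cos_0, sin_0. unfold vscale; simpl. f_equal; ring.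
  simpl. pose proof INRn_pos. field. lra.
Qed.

Lemma effbar_m : eff_bar n m = mkV (z1 * r * cos t) (- (z1 * r * sin t)) (1 - z1).
Proof.
  unfold eff_bar. rewrite eff_form. replace (2 * PI * INR m / INR n) with (PI - t).
  rewrite Rtrigo_facts.cos_pi_minus, sin_PI_x. unfold vsub, vscale, unit_eff; simpl. f_equal; ring.
  unfold t. rewrite INRn. field. pose proof (pos_INR m). lra.
Qed.

Let K := 8 * c ^ 3 - 6 * c.
Let d := vsub (omega n (2 * m)) (omega n (m + 1)).

Lemma K_pos : 0 < K.
Proof.
  destruct basic_facts as [_ [_ [_ [Hc [_ [H1 [Hct [_ [_ [_ [Hh _]]]]]]]]]]].
  unfold K. assert (3 < 4 * c * c) by lra.
  replace (8 * c ^ 3 - 6 * c) with (2 * c * (4 * c * c - 3)) by ring.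
  apply Rmult_lt_0_compat; lra.
Qed.

Lemma dot_gen C S z : dot d (mkV (z1 * r * C) (z1 * r * S) z) = z1 * r * r * K * (c * C - s * S).
Proof.
  destruct basic_facts as [_ [_ [_ [Hc [_ [H1 [Hct [Hst [Hc2 [Hs2 _]]]]]]]]]].
  unfold d. rewrite om_i, om_j. unfold dot, vsub; simpl. rewrite Hs2, Hc2, Hst, Hct. unfold K.
  replace (s * s) with (1 - c * c) by lra. ring_simplify.
  replace (s ^ 3) with (s * (s * s)) by ring. replace (s ^ 2) with (s * s) by ring.
  replace (s * s) with (1 - c * c) by lra. ring.
Qed.

Let th k := 2 * PI * INR k / INR n.

Lemma effk k : eff n k = mkV (z1 * r * cos (th k)) (z1 * r * sin (th k)) z1.
Proof. rewrite eff_form. unfold vscale; simpl. f_equal; unfold th; ring. Qed.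

Lemma effbark k : eff_bar n k = mkV (z1 * r * (- cos (th k))) (z1 * r * (- sin (th k))) (1 - z1).
Proof. unfold eff_bar. rewrite effk. unfold vsub, unit_eff; simpl. f_equal; ring. Qed.

Lemma cos_shift x : cos (x + t / 2) = c * cos x - s * sin x.
Proof. rewrite cos_plus. unfold c, s. ring. Qed.

Lemma half_t : t / 2 = PI / INR (2 * n).
Proof. unfold t. rewrite mult_INR. simpl. field. pose proof INRn_pos. lra. Qed.

Lemma bound_eff k : c * cos (th k) - s * sin (th k) <= c.
Proof.
  rewrite <- cos_shift. unfold c. rewrite half_t.
  replace (th k + PI / INR (2 * n)) with (INR (4 * k + 1) * PI / INR (2 * n)).
  apply cos_odd_le. unfold n; lia. exists (2 * k)%nat. lia.
  unfold th. rewrite plus_INR, !mult_INR. simpl. field. pose proof INRn_pos. lra.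
Qed.

Lemma bound_effbar k : c * (- cos (th k)) - s * (- sin (th k)) <= c.
Proof.
  rewrite <- neg_cos, <- neg_sin, <- cos_shift. unfold c. rewrite half_t.
  replace (th k + PI + PI / INR (2 * n)) with (INR (4 * k + 2 * n + 1) * PI / INR (2 * n)).
  apply cos_odd_le. unfold n; lia. exists (2 * k + n)%nat. lia.
  unfold th. rewrite !plus_INR, !mult_INR. simpl. field. pose proof INRn_pos. lra.
Qed.

Lemma eq_eff k : (k < n)%nat -> c * cos (th k) - s * sin (th k) = c -> cos (th k) = 1 /\ sin (th k) = 0.
Proof.
  intros Hk H.
  destruct basic_facts as [_ [_ [_ [Hc [_ [H1 [Hct [Hst _]]]]]]]].
  destruct (rot_solve c s (cos (th k)) (sin (th k)) H1 ltac:(rewrite Rplus_comm; apply sin2_cos2) H)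
    as [E|[E1 E2]]; auto.
  exfalso. assert (Hc1 : cos (th k + t) = 1).
  { rewrite cos_plus, E1, E2, Hct, Hst. replace (s * s) with (1 - c * c) by lra. ring_simplify.
    replace (c ^ 4) with ((c*c)*(c*c)) by ring. replace (c ^ 2) with (c*c) by ring.
    replace (s ^ 2) with (s * s) by ring. replace (s * s) with (1 - c * c) by lra. ring. }
  replace (th k + t) with (INR (2 * k + 1) * PI / INR n) in Hc1.
  pose proof (cos_odd_lt1 n (2 * k + 1) npos ltac:(exists k; lia)). lra.
  unfold th, t. rewrite plus_INR, mult_INR. simpl. field. pose proof INRn_pos. lra.
Qed.

Lemma eq_effbar k : (k < n)%nat -> c * (- cos (th k)) - s * (- sin (th k)) = c ->
  - cos (th k) = c * c - s * s /\ - sin (th k) = -2 * s * c.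
Proof.
  intros Hk H.
  destruct basic_facts as [_ [_ [_ [Hc [_ [H1 [Hct [Hst _]]]]]]]].
  assert (Hp : (- cos (th k)) * (- cos (th k)) + (- sin (th k)) * (- sin (th k)) = 1).
  { ring_simplify. rewrite <- (sin2_cos2 (th k)). unfold Rsqr. ring. }
  destruct (rot_solve c s _ _ H1 Hp H) as [[E1 E2]|E]; auto.
  exfalso. assert (Hc1 : cos (th k + PI) = 1) by (rewrite neg_cos; lra).
  replace (th k + PI) with (INR (2 * k + n) * PI / INR n) in Hc1.
  pose proof (cos_odd_lt1 n (2 * k + n) npos ltac:(exists (k + m)%nat; unfold n; lia)). lra.
  unfold th. rewrite plus_INR, mult_INR. simpl. field. pose proof INRn_pos. lra.
Qed.

Lemma z1_facts : 0 < z1 /\ z1 * (1 + r * r) = 1.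
Proof.
  destruct basic_facts as [_ [Hr _]]. unfold z1. assert (0 < 1 + r^2) by nra.
  split. apply Rinv_0_lt_compat; auto. replace (r * r) with (r ^ 2) by ring. field. lra.
Qed.

Lemma odd_not_IS : ~ info_symmetry n.
Proof.
  destruct basic_facts as [Hct [Hr [Hrr [Hc [Hs [H1 [Hct2 [Hst [Hc2 [Hs2 [Hh [Hc21 Hsp]]]]]]]]]]]].
  destruct z1_facts as [Hz Hz1]. pose proof K_pos as HK.
  assert (HP : 0 < z1 * r * r * K) by (repeat apply Rmult_lt_0_compat; auto).
  assert (HA : eff n 0 = mkV (z1 * r * 1) (z1 * r * 0) z1) by (rewrite eff0; f_equal; ring).
  assert (HB : eff_bar n m = mkV (z1 * r * cos t) (z1 * r * (- sin t)) (1 - z1))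
    by (rewrite effbar_m; f_equal; ring).
  assert (HdA : dot d (eff n 0) = z1 * r * r * K * c) by (rewrite HA, dot_gen; ring).
  assert (Hdz : forall v, vz v = 0 -> dot d v = 0 -> True) by auto.
  assert (Hdu : dot d unit_eff = 0) by (unfold d; rewrite om_i, om_j; unfold dot, vsub, unit_eff; simpl; ring).
  assert (Hd0 : dot d vzero = 0) by (unfold dot, vzero; simpl; ring).
  apply (not_IS_pair n (2 * m) (m + 1) (eff n 0) (eff_bar n m)).
  - unfold n; lia.
  - unfold n; lia.
  - lia.
  - rewrite eff0, effbar_m. intro E. injection E. intros _ E2 _.
    assert (0 < z1 * r * sin t) by (repeat apply Rmult_lt_0_compat; auto). lra.
  - apply eff_in. unfold n; lia.
  - apply effbar_in. unfold n; lia.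
  - fold d. rewrite HdA, HB, dot_gen. rewrite Hct2, Hst.
    replace (c * (c * c - s * s) - s * - (2 * s * c)) with (c * (c * c + s * s)) by ring.
    rewrite H1; ring.
  - fold d. rewrite HdA. intros g Hg.
    destruct (in_gens n g Hg) as [->|[->|[[k [Hk ->]]|[k [Hk ->]]]]].
    + rewrite Hd0. assert (0 < z1 * r * r * K * c) by (apply Rmult_lt_0_compat; auto). lra.
    + rewrite Hdu. assert (0 < z1 * r * r * K * c) by (apply Rmult_lt_0_compat; auto). lra.
    + rewrite effk, dot_gen. pose proof (bound_eff k). split.
      * apply Rmult_le_compat_l; lra.
      * intros E. apply Rmult_eq_reg_l in E; [|lra]. destruct (eq_eff k Hk E) as [E1 E2].
        left. rewrite eff0. rewrite E1, E2. f_equal; ring.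
    + rewrite effbark, dot_gen. pose proof (bound_effbar k). split.
      * apply Rmult_le_compat_l; lra.
      * intros E. apply Rmult_eq_reg_l in E; [|lra]. destruct (eq_effbar k Hk E) as [E1 E2].
        right. rewrite effbar_m. rewrite E1, E2, Hct2, Hst. f_equal; ring.
  - rewrite eff0. unfold prob. rewrite om_i, om_j. unfold dot, vsub, unit_eff; simpl. intro E.
    assert (E' : z1 * (r * r) * (cos (2 * t) - cos t) = 1 - 2 * z1) by lra.
    assert (E'' : (r * r) * (cos (2 * t) - cos t) = r * r - 1).
    { apply (Rmult_eq_reg_l z1); [|lra]. nra. }
    assert (Hrc : r * r * cos t = 1) by (rewrite Hrr; field; lra).
    assert (r * r * cos (2 * t) = r * r) by lra.
    assert (0 < r * r) by nra. nra.
  - rewrite effbar_m. unfold prob. rewrite om_i, om_j. unfold dot, vsub, unit_eff; simpl. intro E.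
    rewrite Hs2, Hc2 in E.
    assert (Hsc : sin t * sin t = 1 - cos t * cos t) by (rewrite <- (sin2_cos2 t); unfold Rsqr; ring).
    assert (E' : z1 * (r * r) * (cos t - (2 * cos t * cos t - 1)) = 2 * z1 - 1).
    { replace (2 * cos t * cos t - 1) with (cos t * cos t - sin t * sin t) by lra.
      assert (z1*r*r*(sin t*sin t) = z1*r*r*(1 - cos t*cos t)) by (rewrite Hsc; ring).
      assert (z1*r*r*(sin t*sin t)*cos t = z1*r*r*(1 - cos t*cos t)*cos t) by (rewrite Hsc; ring).
      rewrite Hsc. nra. }
    assert (E'' : (r * r) * (cos t - (2 * cos t * cos t - 1)) = 1 - r * r).
    { apply (Rmult_eq_reg_l z1); [|lra]. nra. }
    assert (Hrc : r * r * cos t = 1) by (rewrite Hrr; field; lra).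
    assert (r * r * (2 * cos t * cos t - 1) = r * r) by nra.
    assert (0 < r * r) by nra. rewrite <- Hc2 in *. nra.
Qed.
End OddCase.

Section EvenCase.
Variable h : nat.
Hypothesis Hh : (3 <= h)%nat.
Let n := (2 * h)%nat.
Let t := PI / INR n.
Let r := r_n n.

Lemma INRn' : INR n = 2 * INR h.
Proof. unfold n. rewrite mult_INR. simpl. ring. Qed.

Lemma INRn_pos' : 0 < INR n.
Proof. rewrite INRn'. assert (3 <= INR h) by (pose proof (le_INR 3 h Hh) as X; simpl in X; lra). lra. Qed.

Lemma npos' : (1 <= n)%nat.
Proof. unfold n; lia. Qed.

Lemma neven : Nat.even n = true.
Proof. unfold n. apply Nat.even_even. Qed.

Let ph k := (2 * INR k - 1) * PI / INR n.

Lemma effk' k : eff n k = mkV (r * cos (ph k) / 2) (r * sin (ph k) / 2) (1/2).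
Proof. unfold eff. rewrite neven. unfold vscale; simpl. fold r. f_equal; unfold ph; field. Qed.

Lemma effbark' k : eff_bar n k = mkV (- (r * cos (ph k) / 2)) (- (r * sin (ph k) / 2)) (1/2).
Proof. unfold eff_bar. rewrite effk'. unfold vsub, unit_eff; simpl. f_equal; field. Qed.

Lemma ph0 : ph 0 = - t.
Proof. unfold ph, t. simpl. field. pose proof INRn_pos'. lra. Qed.

Lemma ph1 : ph 1 = t.
Proof. unfold ph, t. simpl. field. pose proof INRn_pos'. lra. Qed.

Lemma basic' : 0 < cos t /\ 0 < r /\ 0 < sin t /\ 0 < cos (2 * t) /\ 0 < sin (2 * t).
Proof.
  destruct (r_facts n ltac:(unfold n; lia)) as [H1 [H2 H3]]. fold t in H1. fold r in H2.
  assert (3 <= INR h) by (pose proof (le_INR 3 h Hh) as X; simpl in X; lra).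
  pose proof PI_RGT_0.
  assert (Tb : 0 < t /\ t <= PI / 6).
  { unfold t. rewrite INRn'. split. apply Rdiv_lt_0_compat; lra.
    unfold Rdiv. apply Rmult_le_compat_l. lra. apply Rinv_le_contravar; lra. }
  split; auto. split; auto. split. apply sin_gt_0; lra.
  split. apply cos_gt_0; lra. apply sin_gt_0; lra.
Qed.

Lemma om1 : omega n 1 = mkV (r * cos (2 * t)) (r * sin (2 * t)) 1.
Proof. unfold omega. fold r. replace (2 * PI * INR 1 / INR n) with (2 * t). reflexivity. unfold t. simpl. field. pose proof INRn_pos'; lra. Qed.

Lemma omj : omega n (h - 1) = mkV (- (r * cos (2 * t))) (r * sin (2 * t)) 1.
Proof.
  unfold omega. fold r. replace (2 * PI * INR (h - 1) / INR n) with (PI - 2 * t).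
  rewrite Rtrigo_facts.cos_pi_minus, sin_PI_x. f_equal; ring.
  unfold t. rewrite minus_INR by lia. rewrite INRn'. simpl. field. pose proof INRn_pos'. rewrite INRn' in *. lra.
Qed.

Let d := vsub (omega n 1) (omega n (h - 1)).

Lemma dot_d x y z : dot d (mkV x y z) = 2 * r * cos (2 * t) * x.
Proof. unfold d. rewrite om1, omj. unfold dot, vsub; simpl. ring. Qed.

Lemma bound_ph k : cos (ph k) <= cos t.
Proof.
  destruct k. rewrite ph0, cos_neg; lra.
  replace (ph (S k)) with (INR (2 * k + 1) * PI / INR n).
  apply cos_odd_le. apply npos'. exists k; lia.
  unfold ph. rewrite S_INR, plus_INR, mult_INR. simpl. field. pose proof INRn_pos'; lra.
Qed.

Lemma bound_phbar k : - cos (ph k) <= cos t.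
Proof.
  rewrite <- neg_cos.
  replace (ph k + PI) with (INR (2 * k + (2 * h - 1)) * PI / INR n).
  apply cos_odd_le. apply npos'. exists (k + h - 1)%nat; lia.
  unfold ph. rewrite plus_INR, mult_INR, minus_INR by lia. rewrite mult_INR. unfold t.
  rewrite INRn'. simpl. field. pose proof INRn_pos'. rewrite INRn' in *. lra.
Qed.

Lemma sin_pm x y : cos x = cos y -> sin x = sin y \/ sin x = - sin y.
Proof.
  intros H. assert (E : (sin x - sin y) * (sin x + sin y) = 0).
  { pose proof (sin2_cos2 x). pose proof (sin2_cos2 y). unfold Rsqr in *. rewrite H in *. nra. }
  apply Rmult_integral in E. destruct E; [left|right]; lra.
Qed.

Lemma even_not_IS : ~ info_symmetry n.
Proof.
  destruct basic' as [Hct [Hr [Hst [Hc2 Hs2]]]].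
  assert (HA : eff n 0 = mkV (r * cos t / 2) (- (r * sin t / 2)) (1/2))
    by (rewrite effk', ph0, cos_neg, sin_neg; f_equal; field).
  assert (HB : eff n 1 = mkV (r * cos t / 2) (r * sin t / 2) (1/2)) by (rewrite effk', ph1; reflexivity).
  assert (HP : 0 < 2 * r * cos (2 * t)) by (repeat apply Rmult_lt_0_compat; lra).
  assert (HM : 0 < r * cos t / 2) by (apply Rdiv_lt_0_compat; [apply Rmult_lt_0_compat|]; lra).
  apply (not_IS_pair n 1 (h - 1) (eff n 0) (eff n 1)).
  - unfold n; lia.
  - unfold n; lia.
  - lia.
  - rewrite HA, HB. intro E. injection E. intros E2.
    assert (0 < r * sin t) by (apply Rmult_lt_0_compat; auto). lra.
  - apply eff_in. unfold n; lia.
  - apply eff_in. unfold n; lia.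
  - fold d. rewrite HA, HB, !dot_d. reflexivity.
  - fold d. rewrite HA, dot_d. intros g Hg.
    destruct (in_gens n g Hg) as [->|[->|[[k [Hk ->]]|[k [Hk ->]]]]].
    + unfold vzero. rewrite dot_d. split. nra. intros E. nra.
    + unfold unit_eff. rewrite dot_d. split. nra. intros E. nra.
    + rewrite effk', dot_d. pose proof (bound_ph k). split.
      * apply Rmult_le_compat_l. lra. unfold Rdiv. apply Rmult_le_compat_r. lra. apply Rmult_le_compat_l; lra.
      * intros E. apply Rmult_eq_reg_l in E; [|lra].
        assert (Ec : cos (ph k) = cos t) by (apply (Rmult_eq_reg_l r); lra).
        destruct (sin_pm _ _ Ec) as [Es|Es].
        -- right. rewrite HB, Ec, Es. reflexivity.
        -- left. rewrite Ec, Es. f_equal; field.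
    + rewrite effbark', dot_d. pose proof (bound_phbar k). split.
      * apply Rmult_le_compat_l. lra. nra.
      * intros E. apply Rmult_eq_reg_l in E; [|lra].
        assert (Ec : cos (ph k) = cos (PI - t)) by (rewrite Rtrigo_facts.cos_pi_minus; apply (Rmult_eq_reg_l r); lra).
        rewrite Rtrigo_facts.cos_pi_minus in Ec.
        destruct (sin_pm (ph k) (PI - t) ltac:(rewrite Rtrigo_facts.cos_pi_minus; auto)) as [Es|Es];
          rewrite sin_PI_x in Es.
        -- left. rewrite Ec, Es. f_equal; field.
        -- right. rewrite HB, Ec, Es. f_equal; field.
  - rewrite HA. unfold prob. rewrite om1, omj. unfold dot, vsub, unit_eff; simpl. intro E.
    assert (0 < r * r * sin t * sin (2 * t)) by (repeat apply Rmult_lt_0_compat; auto). nra.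
  - rewrite HB. unfold prob. rewrite om1, omj. unfold dot, vsub, unit_eff; simpl. intro E.
    assert (0 < r * r * sin t * sin (2 * t)) by (repeat apply Rmult_lt_0_compat; auto). nra.
Qed.
End EvenCase.

Theorem theorem1 (n : nat) :
  ((Nat.Odd n /\ (5 <= n)%nat) \/ (Nat.Even n /\ (6 <= n)%nat)) ->
  ~ info_symmetry n.
Proof.
  intros [[[x Hx] Hn]|[[x Hx] Hn]]; subst n.
  - apply odd_not_IS. lia.
  - apply even_not_IS. lia.
Qed.
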